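(* Let $\pi_2$ be the five-dimensional complex associative algebra with basis $e_1,\dots,e_5$ and nonzero products $e_1e_1=e_2$, $e_1e_2=e_2e_1=e_3$, $e_1e_4=e_4e_1=e_5$, $e_4e_4=e_5$ (all other products of basis elements are zero). A linear operator on $\pi_2$ is a local derivation if and only if its matrix has the form $$\begin{pmatrix} b_{11} & 0 & 0 & 0 & 0 \\ b_{21} & b_{22} & 0 & 0 & 0 \\ b_{31} & b_{32} & b_{33} & b_{34} & 0 \\ b_{41} & 0 & 0 & b_{41}+b_{11} & 0 \\ b_{51} & b_{52} & 0 & b_{54} & b_{22}+b_{52} \end{pmatrix}$$ with $b_{11},b_{21},b_{22},b_{31},b_{32},b_{33},b_{34},b_{41},b_{51},b_{52},b_{54}\in\mathbb{C}$.
   Context: The matrix of a linear operator $T$ is taken with respect to the basis $e_1,\dots,e_5$, with the $j$-th column giving the coordinates of $T(e_j)$. A derivation of an algebra $A$ is a linear map $D$ with $D(xy)=D(x)y+xD(y)$ for all $x,y\in A$. A linear map $\nabla:A\to A$ is a local derivation if for every $x\in A$ there is a derivation $D_x$ of $A$ (depending on $x$) with $\nabla(x)=D_x(x)$. *)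

(* Defs.v *)
(* The complex numbers are modelled as R[i] (real_closed's
   complex) for an arbitrary R : realType (a complete archimedean ordered
   field, i.e. the reals). *)
From mathcomp Require Import all_boot all_order all_algebra.
From mathcomp Require Export complex.
From mathcomp Require Export reals.
Set Implicit Arguments. Unset Strict Implicit. Unset Printing Implicit Defensive.
Import GRing.Theory.
Local Open Scope ring_scope.

(* Structure constants of pi_2 (0-indexed basis e_1..e_5 = indices 0..4):
   e_i e_j = \sum_k pi2_gamma i j k e_k.
   Nonzero products: e1e1=e2, e1e2=e2e1=e3, e1e4=e4e1=e5, e4e4=e5. *)
Definition pi2_gamma (F : nzRingType) (i j k : 'I_5) : F :=
  match nat_of_ord i, nat_of_ord j, nat_of_ord k with
  | 0, 0, 1 => 1
  | 0, 1, 2 => 1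
  | 1, 0, 2 => 1
  | 0, 3, 4 => 1
  | 3, 0, 4 => 1
  | 3, 3, 4 => 1
  | _, _, _ => 0
  end.

Definition pi2_mul (F : nzRingType) (x y : 'cV[F]_5) : 'cV[F]_5 :=
  \col_k \sum_(i < 5) \sum_(j < 5) x i 0 * y j 0 * pi2_gamma F i j k.

(* A linear operator is represented by its matrix M (j-th column =
   coordinates of T(e_j)), acting by x |-> M *m x. *)
Definition is_derivation (F : nzRingType) (D : 'M[F]_5) : Prop :=
  forall x y : 'cV[F]_5,
    D *m pi2_mul x y = pi2_mul (D *m x) y + pi2_mul x (D *m y).

Definition is_local_derivation (F : nzRingType) (N : 'M[F]_5) : Prop :=
  forall x : 'cV[F]_5, exists D : 'M[F]_5, is_derivation D /\ N *m x = D *m x.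

Definition pi2_locder_form (F : nzRingType)
  (b11 b21 b22 b31 b32 b33 b34 b41 b51 b52 b54 : F) : 'M[F]_5 :=
  \matrix_(i < 5, j < 5)
    match nat_of_ord i, nat_of_ord j with
    | 0, 0 => b11
    | 1, 0 => b21 | 1, 1 => b22
    | 2, 0 => b31 | 2, 1 => b32 | 2, 2 => b33 | 2, 3 => b34
    | 3, 0 => b41 | 3, 3 => b41 + b11
    | 4, 0 => b51 | 4, 1 => b52 | 4, 3 => b54 | 4, 4 => b22 + b52
    | _, _ => 0
    end.

(* Main.v *)
Require Import Defs.
From mathcomp Require Import all_boot all_order all_algebra.
From mathcomp Require Import complex reals.
From mathcomp Require Import ring.
Import GRing.Theory Num.Theory.
Set Implicit Arguments. Unset Strict Implicit.
Local Open Scope ring_scope.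

Notation i0 := (@Ordinal 5 0 isT).
Notation i1 := (@Ordinal 5 1 isT).
Notation i2 := (@Ordinal 5 2 isT).
Notation i3 := (@Ordinal 5 3 isT).
Notation i4 := (@Ordinal 5 4 isT).

Lemma sum5 (V : nmodType) (f : 'I_5 -> V) :
  \sum_(i < 5) f i = f i0 + f i1 + f i2 + f i3 + f i4.
Proof.
rewrite !big_ord_recr big_ord0 /= GRing.add0r.
by congr (_ + _ + _ + _ + _); congr f; apply/val_inj.
Qed.

Definition vec5 (F : nzRingType) (a b c d e : F) : 'cV[F]_5 :=
  \col_k match nat_of_ord k with 0=>a|1=>b|2=>c|3=>d|_=>e end.

Lemma vecE (F : nzRingType) (v : 'cV[F]_5) :
  v = vec5 (v i0 0) (v i1 0) (v i2 0) (v i3 0) (v i4 0).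
Proof.
apply/matrixP => k l; rewrite (ord1 l) !mxE.
by case: k => [[|[|[|[|[|k]]]]] Hk] //; rewrite (bool_irrelevance Hk isT).
Qed.

Lemma vec5_inj (F : nzRingType) (a b c d e a' b' c' d' e' : F) :
  vec5 a b c d e = vec5 a' b' c' d' e' ->
  [/\ a = a', b = b', c = c', d = d' & e = e'].
Proof.
move/matrixP=> H.
by split; [move: (H i0 0)|move: (H i1 0)|move: (H i2 0)|move: (H i3 0)|move: (H i4 0)];
  rewrite !mxE.
Qed.

Lemma add_vec5 (F : nzRingType) (a b c d e a' b' c' d' e' : F) :
  vec5 a b c d e + vec5 a' b' c' d' e' = vec5 (a+a') (b+b') (c+c') (d+d') (e+e').
Proof.
apply/matrixP => k l; rewrite !mxE.
by case: k => [[|[|[|[|[|k]]]]] Hk].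
Qed.

Lemma mul_vec5 (F : nzRingType) (M : 'M[F]_5) (a b c d e : F) :
  M *m vec5 a b c d e =
  vec5 (M i0 i0 * a + M i0 i1 * b + M i0 i2 * c + M i0 i3 * d + M i0 i4 * e)
       (M i1 i0 * a + M i1 i1 * b + M i1 i2 * c + M i1 i3 * d + M i1 i4 * e)
       (M i2 i0 * a + M i2 i1 * b + M i2 i2 * c + M i2 i3 * d + M i2 i4 * e)
       (M i3 i0 * a + M i3 i1 * b + M i3 i2 * c + M i3 i3 * d + M i3 i4 * e)
       (M i4 i0 * a + M i4 i1 * b + M i4 i2 * c + M i4 i3 * d + M i4 i4 * e).
Proof.
apply/matrixP => k l; rewrite !mxE sum5 !mxE /=.
by case: k => [[|[|[|[|[|k]]]]] Hk] //; rewrite (bool_irrelevance Hk isT).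
Qed.

Lemma pi2_mul_vec5 (F : comNzRingType) (a b c d e a' b' c' d' e' : F) :
  pi2_mul (vec5 a b c d e) (vec5 a' b' c' d' e') =
  vec5 0 (a * a') (a * b' + b * a') 0 (a * d' + d * a' + d * d').
Proof.
apply/matrixP => k l; rewrite !mxE !sum5 !mxE /pi2_gamma /=.
case: k => [[|[|[|[|[|k]]]]] Hk] //=; ring.
Qed.

Definition dmat (F : nzRingType) (x0 x1 x2 x3 x4 y2 y4 : F) : 'M[F]_5 :=
  \matrix_(i < 5, j < 5)
  match nat_of_ord i, nat_of_ord j with
  | 0,0=>x0 |1,0=>x1|2,0=>x2|3,0=>x3|4,0=>x4
  |1,1=> x0+x0 |2,1=> x1+x1 |4,1=> x3+x3
  |2,2=> x0+x0+x0
  |2,3=> y2 |3,3=> x0+x3 |4,3=> y4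
  |4,4=> x0+x3+(x0+x3)
  |_,_=>0 end.

Lemma dmat_der (F : comNzRingType) (x0 x1 x2 x3 x4 y2 y4 : F) :
  is_derivation (dmat x0 x1 x2 x3 x4 y2 y4).
Proof.
move=> x y; rewrite (vecE x) (vecE y) !pi2_mul_vec5 !mul_vec5 !pi2_mul_vec5 add_vec5 !mxE /=.
by congr vec5; ring.
Qed.

Lemma der_form (F : comNzRingType) (D : 'M[F]_5) : is_derivation D ->
  D = dmat (D i0 i0) (D i1 i0) (D i2 i0) (D i3 i0) (D i4 i0) (D i2 i3) (D i4 i3).
Proof.
move=> H.
move: (H (vec5 1 0 0 0 0) (vec5 1 0 0 0 0)) (H (vec5 1 0 0 0 0) (vec5 0 1 0 0 0))
  (H (vec5 0 0 0 1 0) (vec5 0 0 0 1 0)) (H (vec5 1 0 0 0 0) (vec5 0 0 0 1 0)).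
rewrite !pi2_mul_vec5 !mul_vec5 !pi2_mul_vec5 !add_vec5.
rewrite !(mulr0, mul0r, mulr1, mul1r, addr0, add0r).
move=> /vec5_inj[a0 a1 a2 a3 a4] /vec5_inj[b0 b1 b2 b3 b4] /vec5_inj[c0 c1 c2 c3 c4]
  /vec5_inj[d0 d1 d2 d3 d4].
have e03 : D i0 i3 = 0 by rewrite -d1 c1.
have e13 : D i1 i3 = 0 by rewrite -d2 c2.
have e33 : D i3 i3 = D i0 i0 + D i3 i0.
  rewrite e03 !add0r in c4; apply: (@addIr _ (D i3 i3)); by rewrite -c4 d4.
apply/matrixP => i j; rewrite mxE.
case: i => [[|[|[|[|[|i]]]]] Hi] //; rewrite (bool_irrelevance Hi isT) /=;
case: j => [[|[|[|[|[|j]]]]] Hj] //; rewrite (bool_irrelevance Hj isT) /=;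
rewrite ?b1 ?b2 ?b4 ?a0 ?a1 ?a2 ?a3 ?a4 ?b0 ?b3 ?c0 ?c1 ?c2 ?c3 ?e03 ?e13 ?d4 ?e33 //; ring.
Qed.



Lemma back (F : fieldType) (h2 : (2:F) != 0) (h3 : (3:F) != 0)
  (b11 b21 b22 b31 b32 b33 b34 b41 b51 b52 b54 : F) :
  is_local_derivation (pi2_locder_form b11 b21 b22 b31 b32 b33 b34 b41 b51 b52 b54).
Proof.
move=> v; rewrite (vecE v); move: (v i0 0) (v i1 0) (v i2 0) (v i3 0) (v i4 0) => v0 v1 v2 v3 v4.
have [z0|n0] := eqVneq v0 0.
  rewrite z0; have [z3|n3] := eqVneq v3 0.
    rewrite z3; have [z1|n1] := eqVneq v1 0.
      rewrite z1.
      exists (dmat (b33/3) 0 0 ((b22+b52)/2 - b33/3) 0 0 0); split; first exact: dmat_der.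
      rewrite !mul_vec5 !mxE /=; congr vec5; field; by rewrite ?h2 ?h3.
    exists (dmat (b22/2) ((b32 * v1 + b33 * v2 - 3 * v2 * (b22/2))/(2 * v1)) 0 (b52/2) 0 0 0);
      split; first exact: dmat_der.
    rewrite !mul_vec5 !mxE /=; congr vec5; field; by rewrite ?h2 ?h3 ?n1.
  exists (dmat (b22/2) 0 0 (b41 + b11 - b22/2) 0
      ((b32 * v1 + b33 * v2 + b34 * v3 - 3 * v2 * (b22/2))/v3)
      ((b52 * v1 + b54 * v3 + (b22+b52) * v4 - 2 * v1 * (b41 + b11 - b22/2) - 2 * v4 * (b41+b11))/v3));
    split; first exact: dmat_der.
  rewrite !mul_vec5 !mxE /=; congr vec5; field; by rewrite ?h2 ?h3 ?n3.
pose x1 := (b21 * v0 + b22 * v1 - (b11+b11) * v1)/v0.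
exists (dmat b11 x1
  ((b31 * v0 + b32 * v1 + b33 * v2 + b34 * v3 - v1 * (x1 + x1) - v2 * 3 * b11)/v0)
  b41
  ((b51 * v0 + b52 * v1 + b54 * v3 + (b22+b52) * v4 - v1 * 2 * b41 - v4 * 2 * (b11+b41))/v0)
  0 0); split; first exact: dmat_der.
rewrite !mul_vec5 !mxE /= /x1; congr vec5; field; by rewrite ?n0.
Qed.


Lemma lin2 (F : comNzRingType) (a b c1 d1 c2 d2 k1 k2 : F) :
  a - b = k1 * (c1 - d1) + k2 * (c2 - d2) -> c1 = d1 -> c2 = d2 -> a = b.
Proof. by move=> h e1 e2; apply/eqP; rewrite -subr_eq0 h e1 e2 !subrr !mulr0 addr0. Qed.

Lemma forw (F : comNzRingType) (N : 'M[F]_5) : is_local_derivation N ->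
  exists b11 b21 b22 b31 b32 b33 b34 b41 b51 b52 b54 : F,
    N = pi2_locder_form b11 b21 b22 b31 b32 b33 b34 b41 b51 b52 b54.
Proof.
move=> H.
have [D [HD HN]] := H (vec5 0 1 0 0 0).
rewrite (der_form HD) in HN.
rewrite !mul_vec5 in HN. rewrite !mxE in HN. rewrite /= in HN.
rewrite !(mulr0, mul0r, mulr1, mul1r, addr0, add0r) in HN.
case/vec5_inj: HN => z01 _ _ z31 _; clear D HD.
have [D [HD HN]] := H (vec5 0 0 1 0 0).
rewrite (der_form HD) !mul_vec5 !mxE /= in HN.
rewrite !(mulr0, mul0r, mulr1, mul1r, addr0, add0r) in HN.
case/vec5_inj: HN => z02 z12 _ z32 z42; clear D HD.
have [D [HD HN]] := H (vec5 0 0 0 1 0).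
rewrite (der_form HD) !mul_vec5 !mxE /= in HN.
rewrite !(mulr0, mul0r, mulr1, mul1r, addr0, add0r) in HN.
case/vec5_inj: HN => z03 z13 _ _ _; clear D HD.
have [D [HD HN]] := H (vec5 0 0 0 0 1).
rewrite (der_form HD) !mul_vec5 !mxE /= in HN.
rewrite !(mulr0, mul0r, mulr1, mul1r, addr0, add0r) in HN.
case/vec5_inj: HN => z04 z14 z24 z34 _; clear D HD.
have f33 : N i3 i3 = N i3 i0 + N i0 i0.
  have [D [HD HN]] := H (vec5 1 0 0 (-1) 0).
  rewrite (der_form HD) !mul_vec5 !mxE /= in HN.
  rewrite !(mulr0, mul0r, mulr1, mul1r, addr0, add0r) in HN.
  case/vec5_inj: HN => p0 _ _ p3 _.
  apply: (lin2 (k1 := -1) (k2 := -1) _ p0 p3); rewrite z03; ring.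
have f44 : N i4 i4 = N i1 i1 + N i4 i1.
  have [D [HD HN]] := H (vec5 0 1 0 0 (-1)).
  rewrite (der_form HD) !mul_vec5 !mxE /= in HN.
  rewrite !(mulr0, mul0r, mulr1, mul1r, addr0, add0r) in HN.
  case/vec5_inj: HN => _ p1 _ _ p4.
  apply: (lin2 (k1 := -1) (k2 := -1) _ p1 p4); rewrite z14; ring.
exists (N i0 i0), (N i1 i0), (N i1 i1), (N i2 i0), (N i2 i1), (N i2 i2), (N i2 i3),
  (N i3 i0), (N i4 i0), (N i4 i1), (N i4 i3).
apply/matrixP => i j; rewrite mxE.
case: i => [[|[|[|[|[|i]]]]] Hi] //; rewrite (bool_irrelevance Hi isT) /=;
case: j => [[|[|[|[|[|j]]]]] Hj] //; rewrite (bool_irrelevance Hj isT) /=;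
by rewrite ?z01 ?z31 ?z02 ?z12 ?z32 ?z42 ?z03 ?z13 ?z04 ?z14 ?z24 ?z34 ?f33 ?f44.
Qed.


Theorem theorem5p2 (R : realType) (N : 'M[R[i]]_5) :
  is_local_derivation N <->
  exists b11 b21 b22 b31 b32 b33 b34 b41 b51 b52 b54 : R[i],
    N = pi2_locder_form b11 b21 b22 b31 b32 b33 b34 b41 b51 b52 b54.
Proof.
split; first exact: forw.
case=> b11 [b21 [b22 [b31 [b32 [b33 [b34 [b41 [b51 [b52 [b54 ->]]]]]]]]]].
by apply: back; rewrite pnatr_eq0.
Qed.
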